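(* Let $n\ge2$ and let $\Phi:[n]\times[n-1]\times\cdots\times[2]\to\mathfrak S_n$, $\Phi(j_n,\dots,j_2)=\tau(j_2,2)\tau(j_3,3)\cdots\tau(j_n,n)$. If two sequences $s,s'$ differ in exactly one coordinate, then $\Phi(s')=\Phi(s)\,\sigma$ for some $\sigma\in\mathfrak S_n$ that is either a transposition or a $3$-cycle. If moreover both $s,s'$ satisfy $j_k\le k-1$ for all $k$ (so $\Phi(s),\Phi(s')\in\mathcal C_n$), then $\sigma$ is a $3$-cycle. Consequently, any listing of $[n-1]\times[n-2]\times\cdots\times[1]$ in which consecutive words differ in exactly one coordinate is mapped by $\Phi$ to a listing of all of $\mathcal C_n$ (each once) in which each element is obtained from the previous one by right multiplication by a $3$-cycle.
   Context: $[n]=\{1,\dots,n\}$, $\mathfrak S_n$ the symmetric group on $[n]$, right action, products composed left to right ($i(\sigma\rho)=(i\sigma)\rho$); $\tau(i,j)$ the transposition exchanging $i,j$, with $\tau(k,k)$ the identity. $\mathcal C_n$ is the set of $n$-cycles in $\mathfrak S_n$. $\Phi$ is a bijection onto $\mathfrak S_n$ and restricts to a bijection from $[n-1]\times\cdots\times[1]$ (sequences with $j_k\le k-1$) onto $\mathcal C_n$. *)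

(* Defs.v *)
From mathcomp Require Import all_boot all_order all_fingroup.
Set Implicit Arguments. Unset Strict Implicit. Unset Printing Implicit Defensive.

(* Conventions (0-based): [n] = 'I_n, point i+1 of the paper is i : 'I_n.
   A sequence (j_n,...,j_2) is encoded as s : {ffun 'I_n -> 'I_n} where
   coordinate k : 'I_n stands for the paper's coordinate k+1 and value s k
   stands for j_{k+1} = s k + 1.  Coordinate 0 (paper coordinate 1, not part
   of the sequence) is forced to be 0 by the domain predicate, so that
   tperm (s 0) 0 = 1 just like the absent factor tau(1,1).
   MathComp's permutation product satisfies (p * q) x = q (p x), i.e. it is
   composition left to right, matching the paper's right-action convention. *)

Section Defs.
Variable n : nat.

Definition phi_dom (s : {ffun 'I_n -> 'I_n}) : bool := [forall k, s k <= k].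

Definition cyc_dom (s : {ffun 'I_n -> 'I_n}) : bool :=
  phi_dom s && [forall k : 'I_n, (0 < k) ==> (s k < k)].

Definition Phi (s : {ffun 'I_n -> 'I_n}) : 'S_n := (\prod_(k < n) tperm (s k) k)%g.

Definition differ_one (s s' : {ffun 'I_n -> 'I_n}) : bool :=
  #|[set k | s k != s' k]| == 1.

Definition is_transposition (g : 'S_n) : bool :=
  [exists i, exists j, (i != j) && (g == tperm i j)].

Definition is_3cycle (g : 'S_n) : bool :=
  [exists a, exists b, exists c,
    [&& a != b, b != c, a != c, g a == b, g b == c, g c == a &
        [forall x, (x \notin [:: a; b; c]) ==> (g x == x)]]].

Definition is_ncycle (g : 'S_n) : bool := [set: 'I_n] \in porbits g.

End Defs.

(* Main.v *)
Require Import Defs.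
From mathcomp Require Import all_boot all_order all_fingroup.
From mathcomp Require Import zify.
Set Implicit Arguments. Unset Strict Implicit. Unset Printing Implicit Defensive.
Local Open Scope group_scope.

Definition Q {n} (s : {ffun 'I_n.+1 -> 'I_n.+1}) (m : nat) : 'S_n.+1 :=
  \prod_(i < m) tperm (s (inord i)) (inord i).

Lemma Q0 n (s : {ffun 'I_n.+1 -> 'I_n.+1}) : Q s 0 = 1.
Proof. by rewrite /Q big_ord0. Qed.

Lemma QS n (s : {ffun 'I_n.+1 -> 'I_n.+1}) m :
  Q s m.+1 = Q s m * tperm (s (inord m)) (inord m).
Proof. by rewrite /Q big_ord_recr. Qed.

Lemma Qn n (s : {ffun 'I_n.+1 -> 'I_n.+1}) : Q s n.+1 = Phi s.
Proof. by rewrite /Q /Phi; apply: eq_bigr => i _; rewrite inord_val. Qed.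

Lemma Qfix n (s : {ffun 'I_n.+1 -> 'I_n.+1}) m : phi_dom s ->
  forall x : 'I_n.+1, (m <= x)%N -> Q s m x = x.
Proof.
move=> /forallP hs; elim: m => [|m IH] x hx; first by rewrite Q0 perm1.
have hmn : (m < n.+1)%N by apply: leq_trans hx (ltnW (ltn_ord x)).
rewrite QS permM IH ?(ltnW hx) // tpermD //.
  apply/eqP => /(congr1 val); rewrite /= => e.
  have := hs (inord m); rewrite e inordK // => h.
  by move: (leq_trans hx h); rewrite ltnn.
apply/eqP => /(congr1 val); rewrite /= inordK // => e.
by move: hx; rewrite e ltnn.
Qed.

Lemma Qinj n (s s' : {ffun 'I_n.+1 -> 'I_n.+1}) m : phi_dom s -> phi_dom s' ->
  (m <= n.+1)%N -> Q s m = Q s' m -> forall i, (i < m)%N -> s (inord i) = s' (inord i).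
Proof.
move=> hs hs'; elim: m => [|m IH] hm e i hi //.
have hmn : (m < n.+1)%N by [].
have ea : s (inord m) = s' (inord m).
  have := congr1 (fun p : 'S_n.+1 => p (inord m)) e.
  rewrite !QS !permM !(Qfix hs) ?(Qfix hs') ?inordK // !tpermR.
  by [].
move: e; rewrite !QS ea => /mulIg e.
rewrite ltnS leq_eqVlt in hi; case/orP: hi => [/eqP -> //|hi].
exact: IH (ltnW hm) e i hi.
Qed.

Lemma Phi_inj n (s s' : {ffun 'I_n.+1 -> 'I_n.+1}) : phi_dom s -> phi_dom s' ->
  Phi s = Phi s' -> s = s'.
Proof.
move=> hs hs'; rewrite -!Qn => e; apply/ffunP => i.
by have := Qinj hs hs' (leqnn n.+1) e (ltn_ord i); rewrite inord_val.
Qed.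

Lemma Qsurj n m : (m <= n.+1)%N -> forall P : 'S_n.+1,
  (forall x : 'I_n.+1, (m <= x)%N -> P x = x) ->
  exists s : {ffun 'I_n.+1 -> 'I_n.+1}, phi_dom s /\ Q s m = P.
Proof.
elim: m => [|m IH] hm P hP.
  exists [ffun k => k]; split; first by apply/forallP => k; rewrite ffunE.
  by rewrite Q0; apply/permP => x; rewrite perm1 hP.
have hmn : (m < n.+1)%N by [].
set km : 'I_n.+1 := inord m.
have vkm : nat_of_ord km = m by rewrite /km inordK.
set a := P km.
have ha : (a <= m)%N.
  rewrite leqNgt; apply/negP => h.
  have : P a = a by apply: hP.
  rewrite -{2}/a => /perm_inj /(congr1 val) /= e.
  by move: h; rewrite e vkm ltnn.
have [s' [hs' eQ]] : exists s' : {ffun 'I_n.+1 -> 'I_n.+1}, phi_dom s' /\ Q s' m = P * tperm a km.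
  apply: IH; first exact: ltnW.
  move=> x hx; rewrite permM.
  have [exm|nxm] := eqVneq x km.
    by rewrite exm /a tpermL.
  have hx' : (m < x)%N.
    rewrite ltn_neqAle hx andbT; apply/eqP => e; move: nxm.
    by rewrite -vkm in e; rewrite (val_inj e) eqxx.
  rewrite hP // tpermD //.
  by apply/eqP => e; move: hx'; rewrite -e ltnNge ha.
  by rewrite eq_sym.
exists [ffun k => if k == km then a else s' k]; split.
  apply/forallP => k; rewrite ffunE; case: eqP => [->|_]; first by rewrite vkm.
  by move/forallP: hs'; apply.
rewrite QS ffunE -/km eqxx.
have -> : Q [ffun k => if k == km then a else s' k] m = Q s' m.
  apply: eq_bigr => i _; rewrite ffunE; case: eqP => // /(congr1 (@nat_of_ord _)).
  rewrite vkm inordK ?(ltn_trans (ltn_ord i)) // => e; move: (ltn_ord i); by rewrite e ltnn.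
by rewrite eQ -mulgA tperm2 mulg1.
Qed.

Lemma porbits_mul_tperm_r n (P : 'S_n.+1) x y :
  #|porbits (P * tperm x y)| + (x \notin porbit P y).*2 = #|porbits P| + (x != y).
Proof.
rewrite -porbitsV invMg tpermV -(porbitsV P) -(porbitV P).
exact: porbits_mul_tperm.
Qed.

Lemma porbit_fix n (P : 'S_n.+1) y : P y = y -> forall x, (x \in porbit P y) = (x == y).
Proof.
move=> hy x; apply/porbitP/eqP => [[i ->]|->]; last by exists 0; rewrite expg0 perm1.
elim: i => [|i IH]; first by rewrite expg0 perm1.
by rewrite expgSr permM IH hy.
Qed.

Lemma card_porbits1 n : #|porbits (1 : 'S_n.+1)| = n.+1.
Proof.
have e : forall x : 'I_n.+1, porbit 1 x = [set x].
  by move=> x; apply/setP => z; rewrite (porbit_fix (perm1 x)) in_set1.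
rewrite /porbits (eq_imset _ e) card_imset ?card_ord //.
exact: set1_inj.
Qed.

Lemma ncycleE n (g : 'S_n.+1) : is_ncycle g = (#|porbits g| == 1%N).
Proof.
apply/idP/cards1P => [h|[A hA]].
  exists [set: 'I_n.+1]; apply/setP => B; rewrite in_set1.
  apply/idP/eqP => [/imsetP[x _ ->]|->//].
  case/imsetP: h => y _ ey; rewrite ey; apply/eqP.
  by rewrite eq_porbit_mem -ey inE.
have hx : forall x, porbit g x = A.
  by move=> x; apply/set1P; rewrite -hA; apply: imset_f.
rewrite /is_ncycle hA in_set1; apply/eqP/setP => x.
by rewrite inE -(hx x) porbit_id.
Qed.

Lemma Q1 n (s : {ffun 'I_n.+1 -> 'I_n.+1}) : phi_dom s -> Q s 1 = 1.
Proof.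
move=> /forallP hs; rewrite QS Q0 mul1g.
have : (s (inord 0) <= @inord n 0)%N by apply: hs.
rewrite inordK // leqn0 => /eqP h.
have -> : s (inord 0) = inord 0 by apply: val_inj; rewrite /= h inordK.
exact: tperm1.
Qed.

Lemma Qcyc n (s : {ffun 'I_n.+1 -> 'I_n.+1}) : phi_dom s ->
  (forall k : 'I_n.+1, (0 < k)%N -> (s k < k)%N) ->
  forall m, (0 < m <= n.+1)%N -> #|porbits (Q s m)| + m.-1 = n.+1.
Proof.
move=> hs hc; elim => [//|m IH] /andP[_ hm].
case: m IH hm => [|m] IH hm; first by rewrite Q1 // card_porbits1 addn0.
have := porbits_mul_tperm_r (Q s m.+1) (s (inord m.+1)) (inord m.+1).
rewrite -QS.
have km : nat_of_ord (@inord n m.+1) = m.+1 by rewrite inordK.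
have hlt := hc (inord m.+1); rewrite km in hlt; have {}hlt := hlt isT.
have hne : s (inord m.+1) != inord m.+1.
  by apply/eqP => e; move: hlt; rewrite e km ltnn.
rewrite (porbit_fix (@Qfix _ s m.+1 hs (inord m.+1) _)); last by rewrite km.
rewrite hne /= => e.
have := IH (ltnW hm); rewrite /= => e2.
move: e e2; lia.
Qed.

Lemma Qcount n (s : {ffun 'I_n.+1 -> 'I_n.+1}) : phi_dom s ->
  forall m, (0 < m <= n.+1)%N ->
  (n.+1 + [exists k : 'I_n.+1, [&& (0 < k)%N, (k < m)%N & s k == k]]
     <= #|porbits (Q s m)| + m.-1)%N.
Proof.
move=> hs; elim => [//|m IH] /andP[_ hm].
case: m IH hm => [|m] IH hm.
  set F := [exists k : 'I_n.+1, _].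
  suff -> : F = false by rewrite Q1 // card_porbits1 !addn0.
  apply/negbTE/existsP => -[k].
  by case/and3P => h1 h2; move: h1; rewrite ltnNge -ltnS h2.
have := porbits_mul_tperm_r (Q s m.+1) (s (inord m.+1)) (inord m.+1).
rewrite -QS.
have km : nat_of_ord (@inord n m.+1) = m.+1 by rewrite inordK.
have := IH (ltnW hm); rewrite /= => e2.
set c1 := #|porbits (Q s m.+2)|; set c0 := #|porbits (Q s m.+1)|.
move: e2; set F0 := [exists k : 'I_n.+1, _]; set F1 := [exists k : 'I_n.+1, _].
have hF : F1 -> F0 \/ s (inord m.+1) = inord m.+1.
  case/existsP => k /and3P[h1 h2 /eqP h3].
  rewrite ltnS leq_eqVlt in h2; case/orP: h2 => [/eqP h2|h2].
    have ek : k = inord m.+1 by apply: val_inj; rewrite /= km h2.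
    by right; rewrite -ek.
  by left; apply/existsP; exists k; rewrite h1 h2 h3 eqxx.
case: (eqVneq (s (inord m.+1)) (inord m.+1)) => [hxy|hxy].
  rewrite hxy porbit_id /= => e2 e; rewrite -/c0 in e2.
  move: e; rewrite double0 !addn0 => e.
  case: F1 F0 hF e2 => [] [] //= hF e2; try lia.
rewrite /= => e2 e; rewrite -/c0 in e2.
have hF' : F1 -> F0 by move=> /hF [//|/eqP]; rewrite (negbTE hxy).
move: e; case: (_ \notin _) => /= e; rewrite ?double0 in e;
  clear hF; case: F1 F0 hF' e2 => [] [] //= hF' e2; try lia; by case: (hF' isT).
Qed.

Lemma Phi_split n (s : {ffun 'I_n.+1 -> 'I_n.+1}) (k : 'I_n.+1) :
  Phi s = (\prod_(0 <= i < k) tperm (s (inord i)) (inord i)) * tperm (s k) k *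
          \prod_(k.+1 <= i < n.+1) tperm (s (inord i)) (inord i).
Proof.
rewrite -Qn /Q.
have -> : \prod_(i < n.+1) tperm (s (inord i)) (inord i) =
  \prod_(0 <= i < n.+1) tperm (s (inord i)) (inord i) :> 'S_n.+1 by rewrite big_mkord.
rewrite (big_cat_nat (leq0n k) (ltnW (ltn_ord k))).
rewrite (big_cat_nat (leqnSn k) (ltn_ord k)) big_nat1 inord_val.
exact: mulgA.
Qed.

Lemma core n (s s' : {ffun 'I_n.+1 -> 'I_n.+1}) : differ_one s s' ->
  exists k (B : 'S_n.+1), s k != s' k /\
    Phi s' = Phi s * (tperm (s k) k * tperm (s' k) k) ^ B.
Proof.
case/cards1P => k hk.
have hkk : s k != s' k by have := set11 k; rewrite -hk inE.
have ho : forall i : 'I_n.+1, i != k -> s i = s' i.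
  move=> i hi; have : i \notin [set k] by rewrite in_set1.
  by rewrite -hk inE negbK => /eqP.
exists k, (\prod_(k.+1 <= i < n.+1) tperm (s (inord i)) (inord i)); split => //.
rewrite !(Phi_split _ k).
have -> : \prod_(0 <= i < k) tperm (s' (inord i)) (inord i) =
          \prod_(0 <= i < k) tperm (s (inord i)) (inord i).
  apply: eq_big_nat => i /andP[_ hi]; rewrite ho //.
  apply/eqP => /(congr1 (@nat_of_ord _)); rewrite inordK ?(ltn_trans hi) // => e.
  by move: hi; rewrite e ltnn.
have -> : \prod_(k.+1 <= i < n.+1) tperm (s' (inord i)) (inord i) =
          \prod_(k.+1 <= i < n.+1) tperm (s (inord i)) (inord i).
  apply: eq_big_nat => i /andP[hi hi']; rewrite ho //.
  apply/eqP => /(congr1 (@nat_of_ord _)); rewrite inordK // => e.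
  by move: hi; rewrite e ltnn.
set A := \prod_(0 <= i < k) _; set B := \prod_(k.+1 <= i < n.+1) _.
rewrite conjgE !mulgA mulgK; congr (_ * _ * _).
by rewrite -{2}(tpermV (s k) k) mulgK.
Qed.

Lemma conjT n (a k : 'I_n.+1) (B : 'S_n.+1) : a != k -> is_transposition ((tperm a k) ^ B).
Proof.
move=> h; rewrite tpermJ; apply/existsP; exists (B a); apply/existsP; exists (B k).
by rewrite (inj_eq perm_inj) h eqxx.
Qed.

Lemma conj3 n (a b k : 'I_n.+1) (B : 'S_n.+1) : a != b -> a != k -> b != k ->
  is_3cycle ((tperm a k * tperm b k) ^ B).
Proof.
move=> hab hak hbk.
have hkb : k != b by rewrite eq_sym.
have hka : k != a by rewrite eq_sym.
have hba : b != a by rewrite eq_sym.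
apply/existsP; exists (B k); apply/existsP; exists (B a); apply/existsP; exists (B b).
rewrite !(inj_eq perm_inj) hka hab hkb !permJ !permM tpermR tpermL tpermD //.
rewrite tpermR (tpermD hab hkb) tpermL !eqxx /=.
apply/forallP => x; apply/implyP; rewrite !inE negb_or negb_or => /and3P[h1 h2 h3].
rewrite -(permKV B x) permJ permM.
have e : forall y, (x != B y) -> (B^-1 x != y).
  by move=> y; apply: contra => /eqP <-; rewrite permKV.
rewrite !tpermD ?e // eq_sym ?e //.
Qed.

Lemma part1 n (s s' : {ffun 'I_n.+1 -> 'I_n.+1}) : differ_one s s' ->
  exists sigma : 'S_n.+1, Phi s' = (Phi s * sigma)%g /\
       (is_transposition sigma \/ is_3cycle sigma).
Proof.
case/core => k [B [hne e]]; exists ((tperm (s k) k * tperm (s' k) k) ^ B); split => //.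
have [ha|ha] := eqVneq (s k) k.
  left; rewrite ha tperm1 mul1g; apply: conjT; by move: hne; rewrite ha eq_sym.
have [hb|hb] := eqVneq (s' k) k.
  by left; rewrite hb tperm1 mulg1; apply: conjT.
by right; apply: conj3.
Qed.

Lemma part2 n (s s' : {ffun 'I_n.+1 -> 'I_n.+1}) : cyc_dom s -> cyc_dom s' -> differ_one s s' ->
  exists sigma : 'S_n.+1, Phi s' = (Phi s * sigma)%g /\ is_3cycle sigma.
Proof.
move=> /andP[hs /forallP hc] /andP[hs' /forallP hc'].
case/core => k [B [hne e]]; exists ((tperm (s k) k * tperm (s' k) k) ^ B); split => //.
have [k0|kpos] := posnP k.
  move/forallP: hs => /(_ k); move/forallP: hs' => /(_ k); rewrite k0 !leqn0 => h1 h2.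
  have : nat_of_ord (s k) = s' k by move: h1 h2 => /eqP -> /eqP ->.
  by move/val_inj => e1; rewrite e1 eqxx in hne.
have := hc k; have := hc' k; rewrite kpos /= => h1 h2.
apply: conj3 => //; apply/eqP => h; [move: h2|move: h1]; by rewrite h ltnn.
Qed.

Lemma ncycle_Phi n (s : {ffun 'I_n.+1 -> 'I_n.+1}) : cyc_dom s -> is_ncycle (Phi s).
Proof.
case/andP => hs /forallP hc.
have := Qcyc hs (fun k hk => implyP (hc k) hk) (m := n.+1) (leqnn _).
by rewrite Qn ncycleE /= => e; apply/eqP; lia.
Qed.

Lemma ncycle_inv n (g : 'S_n.+1) : is_ncycle g -> exists s, cyc_dom s /\ Phi s = g.
Proof.
rewrite ncycleE => /eqP hg.
have [s [hs e]] : exists s, phi_dom s /\ Q s n.+1 = g.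
  apply: Qsurj => // x hx; have := ltn_ord x; by rewrite ltnNge hx.
exists s; split; last by rewrite -Qn.
have := Qcount hs (m := n.+1) (leqnn _); rewrite e hg /=.
set F := [exists k, _] => hF.
have hF0 : F = false by move: hF; case: F => //=; lia.
rewrite /cyc_dom hs /=; apply/forallP => k; apply/implyP => hk.
have := forallP hs k; rewrite leq_eqVlt => /orP[/eqP h|//].
move/negbT: hF0 => /existsP; case; exists k; rewrite hk ltn_ord /=.
by apply/eqP; apply: val_inj.
Qed.

Local Close Scope group_scope.

Theorem mainTheorem5 (n : nat) (hn : 2 <= n) :
  (forall s s' : {ffun 'I_n -> 'I_n},
     phi_dom s -> phi_dom s' -> differ_one s s' ->
     exists sigma : 'S_n, Phi s' = (Phi s * sigma)%g /\
       (is_transposition sigma \/ is_3cycle sigma)) /\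
  (forall s s' : {ffun 'I_n -> 'I_n},
     cyc_dom s -> cyc_dom s' -> differ_one s s' ->
     exists sigma : 'S_n, Phi s' = (Phi s * sigma)%g /\ is_3cycle sigma) /\
  (forall L : seq {ffun 'I_n -> 'I_n},
     uniq L -> (forall s, (s \in L) = cyc_dom s) ->
     sorted (@differ_one n) L ->
     [/\ uniq (map (@Phi n) L),
         (forall g : 'S_n, (g \in map (@Phi n) L) = is_ncycle g) &
         sorted (fun p q : 'S_n => [exists sigma : 'S_n, is_3cycle sigma && (q == (p * sigma)%g)])
                (map (@Phi n) L)]).
Proof.
case: n hn => [//|n] _.
split; first by move=> s s' _ _; exact: part1.
split; first exact: part2.
move=> L hu hL hs; split.
- rewrite map_inj_in_uniq // => s s' hs1 hs2.
  apply: Phi_inj; [move: hs1; rewrite hL => /andP[]|move: hs2; rewrite hL => /andP[]] => //.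
- move=> g; apply/mapP/idP => [[s hs1 ->]|hg].
    by apply: ncycle_Phi; rewrite -hL.
  by have [s [hs1 e]] := ncycle_inv hg; exists s; rewrite ?hL.
- rewrite sorted_map; apply: (sub_in_sorted (P := mem L)) hs; last by apply/allP.
  move=> s s' hs1 hs2 /= hd; apply/existsP.
  have c1 : cyc_dom s by rewrite -hL.
  have c2 : cyc_dom s' by rewrite -hL.
  have [sig [e h3]] := part2 c1 c2 hd.
  by exists sig; rewrite h3 e eqxx.
Qed.
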